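(* Let $\mathcal{X}=\langle P,K,V\rangle$ be a polyhedral model. The logical equivalence relation $\equiv$ on $P$ has only finitely many equivalence classes, and for each equivalence class $C$ there is an SLCS formula $\phi^C$ such that for all $x\in P$: $\mathcal{X},x\models\phi^C\iff x\in C$.
   Context: A $d$-simplex $\sigma\subseteq\mathbb{R}^m$ is the convex hull of $d+1$ affinely independent points $v_0,\dots,v_d$ (its vertices); the simplexes spanned by subsets of the vertices (including the empty simplex) are its faces, and $\tau\preceq\sigma$ means $\tau$ is a face of $\sigma$. The relative interior of $\sigma$ is $\tilde\sigma=\{\sum_i\lambda_iv_i:\lambda_i\in(0,1],\sum_i\lambda_i=1\}$. A simplicial complex $K$ is a finite set of simplexes of $\mathbb{R}^m$ closed under taking faces and such that the intersection of any two of its simplexes is a face of both. Its polyhedron is $|K|=\bigcup K$, with the subspace topology of $\mathbb{R}^m$; $\mathcal{C}$ and $\mathcal{I}$ denote closure and interior in this space. The cells of $K$ are the sets $\tilde\sigma$ for nonempty $\sigma\in K$; they form a partition $\tilde K$ of $|K|$. A path in a space $P$ is a continuous $\pi:[0,1]\to P$; $\pi(S)=\{\pi(s):s\in S\}$. Fix a finite set $AP$ of atomic propositions. A polyhedral model is $\mathcal{X}=\langle P,K,V\rangle$ with $K$ a simplicial complex, $P=|K|$, and $V:AP\to\mathcal{P}(P)$ such that each $V(p)$ is a union of cells of $K$ ($K$ is then called coherent with the model). SLCS formulas: $\phi::=\top\mid p\mid\neg\phi\mid\phi\wedge\phi\mid\Box\phi\mid\gamma(\phi,\phi)$, $p\in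 AP$. Semantics at $x\in P$, with $[\![\phi]\!]=\{x\in P:\mathcal{X},x\models\phi\}$: $\top$ always holds; $x\models p$ iff $x\in V(p)$; Boolean connectives as usual; $x\models\Box\phi$ iff $x\in\mathcal{I}([\![\phi]\!])$; $x\models\gamma(\phi,\psi)$ iff there is a path $\pi$ in $P$ with $\pi(0)=x$, $\pi((0,1))\subseteq[\![\phi]\!]$ and $\pi(1)\in[\![\psi]\!]$. Logical equivalence $\equiv$ on $P$: $x\equiv y$ iff $x$ and $y$ satisfy exactly the same SLCS formulas. *)

(* Defs.v *)
From HB Require Import structures.
From mathcomp Require Import all_boot all_order all_algebra.
From mathcomp Require Import all_classical all_reals.
From mathcomp Require Import all_analysis.
Import numFieldNormedType.Exports.
Set Implicit Arguments.
Unset Strict Implicit.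
Unset Printing Implicit Defensive.
Import Order.TTheory GRing.Theory Num.Theory.
Local Open Scope ring_scope.
Local Open Scope classical_set_scope.

(* A simplex is given by its (duplicate-free) list of vertices. *)

Definition conv (R : realType) (m : nat) (s : seq 'rV[R]_m) : set 'rV[R]_m :=
  [set x | exists lam : 'rV[R]_m -> R,
     (forall v, v \in s -> 0 <= lam v) /\
     \sum_(v <- s) lam v = 1 /\ x = \sum_(v <- s) lam v *: v].

Definition relint (R : realType) (m : nat) (s : seq 'rV[R]_m) : set 'rV[R]_m :=
  [set x | exists lam : 'rV[R]_m -> R,
     (forall v, v \in s -> 0 < lam v /\ lam v <= 1) /\
     \sum_(v <- s) lam v = 1 /\ x = \sum_(v <- s) lam v *: v].

Definition affine_indep (R : realType) (m : nat) (s : seq 'rV[R]_m) : Prop :=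
  uniq s /\
  forall lam : 'rV[R]_m -> R,
    \sum_(v <- s) lam v *: v = 0 -> \sum_(v <- s) lam v = 0 ->
    forall v, v \in s -> lam v = 0.

Definition is_complex (R : realType) (m : nat) (K : seq (seq 'rV[R]_m)) : Prop :=
  (forall s, s \in K -> affine_indep s) /\
  (forall s t, s \in K -> uniq t -> {subset t <= s} ->
     exists2 t', t' \in K & perm_eq t t') /\
  (forall s t, s \in K -> t \in K ->
     exists u : seq 'rV[R]_m, {subset u <= s} /\ {subset u <= t} /\
       conv s `&` conv t = conv u).

Definition polyhedron (R : realType) (m : nat) (K : seq (seq 'rV[R]_m))
  : set 'rV[R]_m := [set x | exists2 s, s \in K & conv s x].

Definition is_polyhedral_model (R : realType) (m : nat) (AP : Type)
  (K : seq (seq 'rV[R]_m)) (V : AP -> set 'rV[R]_m) : Prop :=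
  is_complex K /\
  forall p, exists S : seq (seq 'rV[R]_m),
    {subset S <= K} /\ (forall s, s \in S -> s != [::]) /\
    V p = [set x | exists2 s, s \in S & relint s x].

Definition sinterior (R : realType) (m : nat) (P S : set 'rV[R]_m)
  : set 'rV[R]_m :=
  [set x | P x /\ exists U : set 'rV[R]_m, open U /\ U x /\ U `&` P `<=` S].

Definition is_path (R : realType) (m : nat) (P : set 'rV[R]_m)
  (pi : R -> 'rV[R]_m) : Prop :=
  {within `[(0:R), 1], continuous pi} /\
  (forall s : R, 0 <= s <= 1 -> P (pi s)).

Inductive slcs (AP : Type) : Type :=
  | FTop
  | FAtom of AP
  | FNeg of slcs AP
  | FAnd of slcs AP & slcs AP
  | FBox of slcs AP
  | FGamma of slcs AP & slcs AP.
Arguments FTop {AP}.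

Fixpoint sem (R : realType) (m : nat) (AP : Type)
  (K : seq (seq 'rV[R]_m)) (V : AP -> set 'rV[R]_m) (phi : slcs AP)
  : set 'rV[R]_m :=
  match phi with
  | FTop => polyhedron K
  | FAtom p => V p
  | FNeg f => polyhedron K `\` sem K V f
  | FAnd f g => sem K V f `&` sem K V g
  | FBox f => sinterior (polyhedron K) (sem K V f)
  | FGamma f g =>
      [set x | exists pi : R -> 'rV[R]_m,
         is_path (polyhedron K) pi /\ pi 0 = x /\
         (forall s : R, 0 < s < 1 -> sem K V f (pi s)) /\ sem K V g (pi 1)]
  end.

Definition lequiv (R : realType) (m : nat) (AP : Type)
  (K : seq (seq 'rV[R]_m)) (V : AP -> set 'rV[R]_m) (x y : 'rV[R]_m) : Prop :=
  forall phi : slcs AP, sem K V phi x <-> sem K V phi y.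

Definition eq_classes (R : realType) (m : nat) (AP : Type)
  (K : seq (seq 'rV[R]_m)) (V : AP -> set 'rV[R]_m) : set (set 'rV[R]_m) :=
  [set C | exists2 x, polyhedron K x &
     C = [set y | polyhedron K y /\ lequiv K V x y]].

(* Main.v *)
Require Import Defs.
From HB Require Import structures.
From mathcomp Require Import all_boot all_order all_algebra.
From mathcomp Require Import all_classical all_reals.
From mathcomp Require Import all_analysis.
Import numFieldNormedType.Exports.
Set Implicit Arguments.
Unset Strict Implicit.
Unset Printing Implicit Defensive.
Import Order.TTheory GRing.Theory Num.Theory.
From mathcomp Require Import lra.
Local Open Scope classical_set_scope.
Local Open Scope ring_scope.
Local Notation conv := Defs.conv.
Local Notation relint := Defs.relint.
Lemma conv_perm (R : realType) (m : nat) (s t : seq 'rV[R]_m) :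
  perm_eq s t -> conv s = conv t.
Proof.
move=> pst; apply/seteqP; split=> x [lam [h1 [h2 h3]]]; exists lam.
- by rewrite -(perm_big _ pst) -(perm_big _ pst); split=> // v; rewrite -(perm_mem pst); apply: h1.
- by rewrite (perm_big _ pst) (perm_big _ pst); split=> // v; rewrite (perm_mem pst); apply: h1.
Qed.

Lemma relint_perm (R : realType) (m : nat) (s t : seq 'rV[R]_m) :
  perm_eq s t -> relint s = relint t.
Proof.
move=> pst; apply/seteqP; split=> x [lam [h1 [h2 h3]]]; exists lam.
- by rewrite -(perm_big _ pst) -(perm_big _ pst); split=> // v; rewrite -(perm_mem pst); apply: h1.
- by rewrite (perm_big _ pst) (perm_big _ pst); split=> // v; rewrite (perm_mem pst); apply: h1.
Qed.

Lemma relint_conv (R : realType) (m : nat) (s : seq 'rV[R]_m) :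
  relint s `<=` conv s.
Proof.
move=> x [lam [h1 h2]]; exists lam; split=> // v /h1 [] /ltW //.
Qed.

Lemma sum_ge_term (R : realType) (T : eqType) (s : seq T) (f : T -> R) v0 :
  (forall v, v \in s -> 0 <= f v) -> v0 \in s -> f v0 <= \sum_(v <- s) f v.
Proof.
elim: s => [//|a s IH] h; rewrite in_cons big_cons => /orP [/eqP ->|hv].
  by rewrite lerDl big_seq sumr_ge0 // => i hi; apply: h; rewrite in_cons hi orbT.
have h' : forall v, v \in s -> 0 <= f v by move=> v hv'; apply: h; rewrite in_cons hv' orbT.
apply: le_trans (IH h' hv) _.
by rewrite lerDr; apply: h; rewrite in_cons eqxx.
Qed.

Lemma sum_exchange_sub (R : realType) (m : nat) (V : zmodType)
  (s u : seq 'rV[R]_m) (F : 'rV[R]_m -> V) :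
  uniq s -> {subset u <= s} ->
  \sum_(w <- u) F w = \sum_(v <- s) \sum_(w <- u | w == v) F w.
Proof.
move=> us sub; rewrite (exchange_big_dep xpredT) //=.
apply: eq_big_seq => w wu; rewrite big_mkcond (bigD1_seq w) //=; last by apply: sub.
rewrite eqxx big1 ?addr0 // => v vw; by rewrite eq_sym (negbTE vw).
Qed.
Lemma coord_unique (R : realType) (m : nat) (s u : seq 'rV[R]_m)
  (lam mu : 'rV[R]_m -> R) : affine_indep s -> {subset u <= s} ->
  \sum_(v <- s) lam v = 1 -> \sum_(w <- u) mu w = 1 ->
  \sum_(v <- s) lam v *: v = \sum_(w <- u) mu w *: w ->
  forall v, v \in s -> v \notin u -> lam v = 0.
Proof.
move=> [us ai] sub hl hm hx.
pose mu' v := \sum_(w <- u | w == v) mu w.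
have h0 := ai (fun v => lam v - mu' v).
have A : \sum_(v <- s) (lam v - mu' v) *: v = 0.
  rewrite (eq_bigr (fun v => lam v *: v - mu' v *: v)) => [|v _]; last by rewrite scalerBl.
  rewrite sumrB hx (sum_exchange_sub (fun w => mu w *: w) us sub).
  apply/eqP; rewrite subr_eq0; apply/eqP; apply: eq_bigr => v _; rewrite /mu' scaler_suml.
  by apply: eq_bigr => w /eqP ->.
have B : \sum_(v <- s) (lam v - mu' v) = 0.
  by rewrite sumrB hl -(sum_exchange_sub mu us sub) hm subrr.
move=> v vs vu; have := h0 A B v vs; rewrite /mu' big_seq_cond big1 ?subr0 // => w /andP [wu /eqP wv].
by move: vu; rewrite -wv wu.
Qed.
Lemma relint_sub (R : realType) (m : nat) (K : seq (seq 'rV[R]_m)) s t x :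
  is_complex K -> s \in K -> t \in K -> relint s x -> relint t x -> {subset s <= t}.
Proof.
move=> [ai [cl inter]] sK tK hs ht.
have [u [us [ut hI]]] := inter s t sK tK.
have : conv u x by rewrite -hI; split; apply: relint_conv.
case=> mu [_ [hm hmx]]; case: hs => lam [hl [hl1 hlx]].
move=> v vs; have [vu|vu] := boolP (v \in u); first by apply: ut.
have := coord_unique (ai s sK) us hl1 hm _ vs vu.
by rewrite -hlx -hmx => /(_ erefl) h; have [] := hl v vs; rewrite h ltxx.
Qed.

Lemma relint_unique (R : realType) (m : nat) (K : seq (seq 'rV[R]_m)) s t x :
  is_complex K -> s \in K -> t \in K -> relint s x -> relint t x -> relint s = relint t.
Proof.
move=> hK sK tK hs ht; apply: relint_perm; apply: uniq_perm.
- by case: hK => /(_ s sK) [].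
- by case: hK => /(_ t tK) [].
move=> v; apply/idP/idP.
  exact: (relint_sub hK sK tK hs ht).
exact: (relint_sub hK tK sK ht hs).
Qed.

Lemma sum_filter_zero (T : eqType) (V : zmodType) (t : seq T) (P : pred T) (G : T -> V) :
  (forall v, v \in t -> ~~ P v -> G v = 0) ->
  \sum_(v <- seq.filter P t) G v = \sum_(v <- t) G v.
Proof.
move=> h; rewrite big_filter big_mkcond; apply: eq_big_seq => v vt.
by case: ifP => // /negbT /(h v vt) ->.
Qed.

Lemma sum_lift (T : eqType) (V : zmodType) (s tau : seq T) (G : T -> V) :
  uniq s -> uniq tau -> {subset s <= tau} ->
  \sum_(v <- tau) (if v \in s then G v else 0) = \sum_(v <- s) G v.
Proof.
move=> us ut sub; rewrite -big_mkcond -big_filter; apply: perm_big.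
apply: uniq_perm; first exact: filter_uniq.
  exact: us.
move=> v; rewrite mem_filter; apply/andP/idP => [[]//|vs]; split=> //; exact: sub.
Qed.

Lemma support_face (R : realType) (m : nat) (K : seq (seq 'rV[R]_m)) t z :
  is_complex K -> t \in K -> conv t z ->
  exists2 r, r \in K & relint r z /\
    forall v, v \notin r -> conv (seq.filter (predC1 v) t) z.
Proof.
move=> hK tK [lam [h0 [h1 hz]]].
have [ai [cl _]] := hK.
pose r0 := seq.filter (fun v => 0 < lam v) t.
have ur0 : uniq r0 by rewrite filter_uniq //; case: (ai t tK).
have sr0 : {subset r0 <= t} by move=> v; rewrite mem_filter => /andP [].
have [r rK pr] := cl t r0 tK ur0 sr0.
exists r => //; split.
  rewrite -(relint_perm pr); exists lam; split; last split.
  - move=> v; rewrite mem_filter => /andP [lv vt]; split=> //.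
    by rewrite -h1; apply: sum_ge_term.
  - rewrite sum_filter_zero // => v vt; rewrite -leNgt => lv0.
    by apply/eqP; rewrite eq_le lv0 h0.
  - rewrite hz sum_filter_zero // => v vt; rewrite -leNgt => lv0.
    have -> : lam v = 0 by apply/eqP; rewrite eq_le lv0 h0.
    by rewrite scale0r.
move=> v; rewrite -(perm_mem pr) mem_filter => hv.
have lv : forall w, w \in t -> w = v -> lam w = 0.
  move=> w wt wv; subst w; move: hv; rewrite wt andbT -leNgt => lv0.
  by apply/eqP; rewrite eq_le lv0 h0.
exists lam; split; last split.
- by move=> w; rewrite mem_filter => /andP [_ /h0].
- by rewrite sum_filter_zero // => w wt /negPn /eqP /(lv w wt) ->.
- by rewrite hz sum_filter_zero // => w wt /negPn /eqP /(lv w wt) ->; rewrite scale0r.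
Qed.

Lemma relint_seg (R : realType) (m : nat) (s tau : seq 'rV[R]_m) y z (t : R) :
  affine_indep tau -> uniq s -> {subset s <= tau} -> relint s y -> relint tau z ->
  0 < t <= 1 -> relint tau ((1 - t) *: y + t *: z).
Proof.
move=> [ut _] us sub [lam [hl [hl1 hy]]] [mu [hm [hm1 hz]]] /andP [t0 t1].
pose lam' v := if v \in s then lam v else 0.
have e1 : \sum_(v <- tau) lam' v = 1 by rewrite sum_lift.
have e2 : \sum_(v <- tau) lam' v *: v = y.
  rewrite hy -(sum_lift (fun v => lam v *: v) us ut sub); apply: eq_bigr => v _.
  by rewrite /lam'; case: ifP => _ //; rewrite scale0r.
have l0 : forall v, 0 <= lam' v.
  by move=> v; rewrite /lam'; case: ifP => [/hl [/ltW]|] //.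
pose nu v := (1 - t) * lam' v + t * mu v.
have n0 : forall v, v \in tau -> 0 < nu v.
  move=> v vt; rewrite /nu; apply: ltr_wpDl.
    by apply: mulr_ge0 => //; rewrite subr_ge0.
  by apply: mulr_gt0 => //; case: (hm v vt).
have e3 : \sum_(v <- tau) nu v = 1.
  by rewrite big_split /= -!mulr_sumr e1 hm1 !mulr1 subrK.
exists nu; split; last split => //.
  move=> v vt; split; first exact: n0.
  by rewrite -e3; apply: sum_ge_term => // w wt; apply/ltW/n0.
rewrite hz -e2 !scaler_sumr -big_split /=; apply: eq_bigr => v _.
by rewrite /nu [RHS]scalerDl !scalerA.
Qed.
Lemma sum_continuous (T : topologicalType) (R : realType) (V : normedModType R)
  (I : Type) (r : seq I) (G : I -> T -> V) :
  (forall i, continuous (G i)) -> continuous (fun x => \sum_(i <- r) G i x).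
Proof.
move=> hG; elim: r => [|a r IH].
  by under eq_fun do rewrite big_nil; apply: cst_continuous.
under eq_fun do rewrite big_cons.
by move=> x; apply: continuousD; [apply: hG|apply: IH].
Qed.

Lemma conv_closed (R : realType) (m : nat) (f : seq 'rV[R]_m) :
  uniq f -> closed (conv f).
Proof.
move=> uf; set n := size f.
pose F (l : 'rV[R]_n) := \sum_(i < n) l ord0 i *: nth 0 f i.
pose D1 := [set l : 'rV[R]_n | forall i, `[(0:R), 1]%classic (l ord0 i)].
pose D2 := [set l : 'rV[R]_n | \sum_(i < n) l ord0 i = 1].
have Fc : continuous F.
  apply: sum_continuous => i l.
  apply: (@continuousZ R _ _ (fun x : 'rV[R]_n => x ord0 i) (fun=> nth 0 f i)); last exact: cst_continuous.
  exact: coord_continuous.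
have -> : conv f = F @` (D1 `&` D2).
  apply/seteqP; split => x.
    case=> lam [h0 [h1 hx]]; exists (\row_i lam (nth 0 f i)).
      split.
        move=> i; rewrite mxE /= in_itv /= h0 ?mem_nth //=.
        by rewrite -h1; apply: sum_ge_term => //; rewrite mem_nth.
      rewrite /D2 /= -h1 (big_nth 0) big_mkord; apply: eq_bigr => i _; by rewrite mxE.
    rewrite hx /F (big_nth 0) big_mkord; apply: eq_bigr => i _; by rewrite mxE.
  case=> l [D1l D2l] <-.
  pose lam v := if insub (index v f) is Some i then l ord0 (i : 'I_n) else 0.
  have e : forall i : 'I_n, lam (nth 0 f i) = l ord0 i.
    by move=> i; rewrite /lam index_uniq // valK.
  exists lam; split; last split.
  - move=> v vf; rewrite /lam; case: insub => [i|//].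
    by have := D1l i; rewrite /= in_itv /= => /andP [].
  - rewrite (big_nth 0) big_mkord -D2l; apply: eq_bigr => i _; exact: e.
  - rewrite /F (big_nth 0) big_mkord; apply: eq_bigr => i _; by rewrite e.
have hH : hausdorff_space 'rV[R]_m by apply: norm_hausdorff.
have c1 : compact D1 := @rV_compact R n (fun=> `[(0:R), 1]%classic) (fun=> @segment_compact R 0 1).
have hsc : continuous (fun l : 'rV[R]_n => \sum_(i < n) l ord0 i).
  by apply: (@sum_continuous _ R R^o) => i; apply: coord_continuous.
have c2 : closed D2 := @preimage_closed _ _ (fun l : 'rV[R]_n => \sum_(i < n) l ord0 i)
   [set x : R | x = 1] (fun l _ => hsc l) (@closed_eq R 1).
have cD : compact (D1 `&` D2) := compact_closedI c1 c2.
have cpt : compact (F @` (D1 `&` D2)) := continuous_compact (continuous_subspaceT Fc) cD.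
exact: (compact_closed hH cpt).
Qed.
Lemma open_forall_seq (T : topologicalType) (I : eqType) (L : seq I) (C : I -> set T) :
  (forall i, closed (C i)) -> open [set z | forall i, i \in L -> ~ C i z].
Proof.
move=> hC; elim: L => [|a L IH].
  rewrite (_ : [set z | _] = setT); first exact: openT.
  by apply/seteqP; split=> // z _ i; rewrite in_nil.
rewrite (_ : [set z | _] = ~` C a `&` [set z | forall i, i \in L -> ~ C i z]).
  by apply: openI => //; rewrite openC.
apply/seteqP; split => z /=.
  move=> h; split; first by apply: h; rewrite in_cons eqxx.
  by move=> i iL; apply: h; rewrite in_cons iL orbT.
case=> h1 h2 i; rewrite in_cons => /orP [/eqP ->//|]; exact: h2.
Qed.

Lemma not_in_face (R : realType) (m : nat) (K : seq (seq 'rV[R]_m)) s t v y :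
  is_complex K -> s \in K -> t \in K -> relint s y -> v \in s ->
  ~ conv (seq.filter (predC1 v) t) y.
Proof.
move=> hK sK tK hy vs hc; have [ai [cl inter]] := hK.
set g := seq.filter (predC1 v) t.
have ug : uniq g by rewrite filter_uniq //; case: (ai t tK).
have sg : {subset g <= t} by move=> w; rewrite mem_filter => /andP [].
have [g' g'K pg] := cl t g tK ug sg.
have [u [us [ug' hI]]] := inter s g' sK g'K.
have : conv u y by rewrite -hI; split; [apply: relint_conv | rewrite -(conv_perm pg)].
case=> mu [_ [hm hmx]]; case: hy => lam [hl [hl1 hlx]].
have vu : v \notin u.
  apply/negP => /ug'; rewrite -(perm_mem pg) mem_filter /= eqxx //.
have := coord_unique (ai s sK) us hl1 hm _ vs vu.
by rewrite -hlx -hmx => /(_ erefl) h; have [] := hl v vs; rewrite h ltxx.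
Qed.

Lemma star_nbhs (R : realType) (m : nat) (K : seq (seq 'rV[R]_m)) s y :
  is_complex K -> s \in K -> relint s y ->
  exists U : set 'rV[R]_m, open U /\ U y /\ forall z, U z -> polyhedron K z ->
     exists2 r, r \in K & relint r z /\ {subset s <= r}.
Proof.
move=> hK sK hy.
pose L := [seq (t, v) | t <- K, v <- s].
pose C (p : seq 'rV[R]_m * 'rV[R]_m) :=
  if uniq p.1 then conv (seq.filter (predC1 p.2) p.1) else set0.
have uK : forall t, t \in K -> uniq t by move=> t tK; case: hK => /(_ t tK) [].
exists [set z | forall p, p \in L -> ~ C p z]; split; last split.
- apply: open_forall_seq => p; rewrite /C; case: ifP => up; last exact: closed0.
  by apply: conv_closed; rewrite filter_uniq.
- move=> p /allpairsP [[t v] [tK vs ->]]; rewrite /C /= uK //.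
  exact: (not_in_face hK sK tK hy vs).
- move=> z hz [t tK hzt].
  have [r rK [hr hf]] := support_face hK tK hzt.
  exists r => //; split => // v vs; apply/negPn/negP => vr.
  apply: (hz (t, v)); first by apply/allpairsP; exists (t, v).
  by rewrite /C /= uK //; exact: hf.
Qed.
Lemma nbhs0_small (R : realType) (P : set R) :
  nbhs (0:R) P -> exists t, 0 < t < 1 /\ P t.
Proof.
move=> /nbhs_ballP [e /= e0 he].
pose t := Num.min (e / 2) (2^-1 : R).
have t0 : 0 < t by rewrite lt_min; apply/andP; split; lra.
have t1 : t < 1 by rewrite gt_min; apply/orP; right; lra.
exists t; split; first by rewrite t0 t1.
apply: he; rewrite /ball /= sub0r normrN gtr0_norm //.
by rewrite gt_min; apply/orP; left; lra.
Qed.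
Lemma seg_continuous (R : realType) (m : nat) (x z : 'rV[R]_m) :
  continuous (fun t : R => (1 - t) *: x + t *: z).
Proof.
move=> t.
apply: (@continuousD R _ _ (fun t : R => (1 - t) *: x) (fun t => t *: z)).
  apply: (@continuousZ R _ _ (fun t : R => 1 - t) (fun=> x)); last exact: cst_continuous.
  apply: (@continuousB R R^o R (fun=> 1) id); [exact: cst_continuous | exact: cvg_id].
apply: (@continuousZ R _ _ id (fun=> z)); last exact: cst_continuous.
exact: cvg_id.
Qed.

Lemma seg_near (R : realType) (m : nat) (U : set 'rV[R]_m) x z :
  open U -> U x -> exists t, 0 < t < 1 /\ U ((1 - t) *: x + t *: z).
Proof.
move=> oU Ux.
have := @seg_continuous R m x z 0 U; rewrite /= subr0 scale1r scale0r addr0.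
move=> /(_ (open_nbhs_nbhs (conj oU Ux))).
exact: nbhs0_small.
Qed.
Lemma within_contP (T U : topologicalType) (A : set T) (f : T -> U) :
  {within A, continuous f} <->
  (forall x, A x -> forall N, nbhs (f x) N -> nbhs x (fun v => A v -> N (f v))).
Proof.
split.
  move=> /subspace_continuousP h x Ax N hN; have := h x Ax N hN.
  by [].
move=> h; apply/subspace_continuousP => x Ax N hN.
exact: h.
Qed.
Lemma within01 (R : realType) (t : R) : `[(0:R), 1]%classic t <-> 0 <= t <= 1.
Proof. by rewrite /= in_itv. Qed.

Lemma clamp_continuous (R : realType) (s0 : R) :
  continuous (fun t : R => Num.min (Num.max t s0) 1).
Proof.
have mxc : continuous (fun t : R => Num.max t s0).
  have := (@max_fun_continuous _ _ _ (fun t : R => t) (fun=> s0) (fun x => cvg_id) (@cst_continuous _ _ s0)).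
  by move=> h; exact: h.
have := (@min_fun_continuous _ _ _ (fun t : R => Num.max t s0) (fun=> 1) mxc (@cst_continuous R R 1)).
by move=> h; exact: h.
Qed.

Lemma comp_clamp (R : realType) (m : nat) (pi : R -> 'rV[R]_m) (s0 : R) :
  {within `[(0:R), 1], continuous pi} -> 0 <= s0 <= 1 ->
  continuous (fun t => pi (Num.min (Num.max t s0) 1)).
Proof.
move=> /within_contP hc /andP [s00 s01] t N hN.
have Au : `[(0:R), 1]%classic (Num.min (Num.max t s0) 1).
  by rewrite within01; apply/andP; split; [rewrite le_min le_max s00 orbT ler01 | rewrite ge_min lexx orbT].
have hw := hc _ Au N hN.
have hw2 : nbhs t (fun v => `[(0:R), 1]%classic (Num.min (Num.max v s0) 1) ->
                            N (pi (Num.min (Num.max v s0) 1))).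
  exact: (@clamp_continuous R s0 t _ hw).
suff H : nbhs t (fun v => N (pi (Num.min (Num.max v s0) 1))) by exact: H.
apply: filterS hw2 => v; apply.
by rewrite within01; apply/andP; split; [rewrite le_min le_max s00 orbT ler01 | rewrite ge_min lexx orbT].
Qed.
Definition prepend (R : realType) (m : nat) (pi : R -> 'rV[R]_m) (y : 'rV[R]_m) (s0 : R) :=
  fun t : R => pi (Num.min (Num.max t s0) 1) + (1 - Num.min (t / s0) 1) *: (y - pi s0).

Lemma prepend_continuous (R : realType) (m : nat) (pi : R -> 'rV[R]_m) y s0 :
  {within `[(0:R), 1], continuous pi} -> 0 < s0 <= 1 ->
  continuous (prepend pi y s0).
Proof.
move=> hc /andP [s00 s01].
have hcc : continuous (fun t : R => 1 - Num.min (t / s0) 1).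
  move=> t; apply: (@continuousB R R^o R (fun=> 1) (fun t => Num.min (t / s0) 1)).
    exact: cst_continuous.
  have := (@min_fun_continuous _ _ _ (fun t : R => t / s0) (fun=> 1) (@mulrr_continuous R s0^-1) (@cst_continuous R R 1)).
  by move=> h; exact: h.
move=> t; apply: (@continuousD R _ _ (fun t => pi (Num.min (Num.max t s0) 1))
   (fun t => (1 - Num.min (t / s0) 1) *: (y - pi s0))).
  by apply: comp_clamp => //; rewrite (ltW s00).
apply: (@continuousZ R _ _ (fun t : R => 1 - Num.min (t / s0) 1) (fun=> y - pi s0)).
  exact: hcc.
exact: cvg_cst.
Qed.

Lemma prepend_hi (R : realType) (m : nat) (pi : R -> 'rV[R]_m) y s0 t :
  0 < s0 -> s0 <= t <= 1 -> prepend pi y s0 t = pi t.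
Proof.
move=> s00 /andP [h1 h2]; rewrite /prepend.
have -> : Num.max t s0 = t by apply/max_idPl.
have -> : Num.min t 1 = t by apply/min_idPl.
have -> : Num.min (t / s0) 1 = 1.
  by apply/min_idPr; rewrite ler_pdivlMr // mul1r.
by rewrite subrr scale0r addr0.
Qed.

Lemma prepend_lo (R : realType) (m : nat) (pi : R -> 'rV[R]_m) y s0 t :
  0 < s0 <= 1 -> 0 <= t <= s0 ->
  prepend pi y s0 t = (1 - t / s0) *: y + (t / s0) *: pi s0.
Proof.
move=> /andP [s00 s01] /andP [h1 h2]; rewrite /prepend.
have -> : Num.max t s0 = s0 by apply/max_idPr.
have -> : Num.min s0 1 = s0 by apply/min_idPl.
have -> : Num.min (t / s0) 1 = t / s0.
  by apply/min_idPl; rewrite ler_pdivrMr // mul1r.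
rewrite scalerBr [X in _ - X]scalerBl scale1r opprB addrCA.
by rewrite subrKC.
Qed.
Lemma path_start (R : realType) (m : nat) (P : set 'rV[R]_m) (pi : R -> 'rV[R]_m)
  (U : set 'rV[R]_m) :
  is_path P pi -> open U -> U (pi 0) -> exists s0, 0 < s0 < 1 /\ U (pi s0).
Proof.
move=> [/within_contP hc _] oU U0.
have A0 : `[(0:R), 1]%classic 0 by rewrite within01 lexx ler01.
have := hc 0 A0 U (open_nbhs_nbhs (conj oU U0)).
move=> /nbhs0_small [t [/andP [t0 t1] h]]; exists t; split; first by rewrite t0 t1.
by apply: h; rewrite within01 (ltW t0) (ltW t1).
Qed.

Lemma relint_poly (R : realType) (m : nat) (K : seq (seq 'rV[R]_m)) s x :
  s \in K -> relint s x -> polyhedron K x.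
Proof. by move=> sK hx; exists s => //; apply: relint_conv. Qed.

Definition cellinv (R : realType) (m : nat) (K : seq (seq 'rV[R]_m)) (S : set 'rV[R]_m) :=
  forall s, s \in K -> forall x y, relint s x -> relint s y -> S x -> S y.

Lemma sem_inv (R : realType) (m : nat) (AP : Type) (K : seq (seq 'rV[R]_m))
  (V : AP -> set 'rV[R]_m) (phi : slcs AP) :
  is_polyhedral_model K V -> cellinv K (sem K V phi).
Proof.
move=> [hK hV]; have [ai _] := hK.
have us : forall s, s \in K -> uniq s by move=> s sK; case: (ai s sK).
elim: phi => [|p|f IH|f IHf g IHg|f IH|f IHf g IHg] s sK x y hx hy /=.
- by move=> _; apply: relint_poly hy.
- have [S [SK [_ ->]]] := hV p.
  case=> t tS ht; exists t => //.
  by rewrite -(relint_unique hK sK (SK t tS) hx ht).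
- case=> _ nfx; split; first exact: relint_poly hy.
  by move=> fy; apply: nfx; apply: (IH s sK y x).
- by case=> h1 h2; split; [apply: (IHf s sK x y) | apply: (IHg s sK x y)].
- case=> Px [U [oU [Ux hU]]]; split; first exact: relint_poly hy.
  have [U' [oU' [U'y hst]]] := star_nbhs hK sK hy.
  exists U'; split=> //; split=> // z [U'z Pz].
  have [r rK [hrz sr]] := hst z U'z Pz.
  have [t [/andP [t0 t1] hUt]] := seg_near z oU Ux.
  have hrw : relint r ((1 - t) *: x + t *: z).
    apply: (@relint_seg R m s r x z t) => //; [exact: ai | exact: us | by rewrite t0 ltW].
  apply: (IH r rK _ z hrw hrz); apply: hU; split=> //.
  exact: relint_poly hrw.
- case=> pi [hp [pi0 [hf hg]]].
  have [U [oU [Ux hst]]] := star_nbhs hK sK hx.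
  have [s0 [/andP [s00 s01] hU0]] := path_start hp oU (eq_ind_r U Ux pi0).
  have Ps0 : polyhedron K (pi s0) by apply: hp.2; rewrite !ltW.
  have [r rK [hr sr]] := hst _ hU0 Ps0.
  have fs0 : sem K V f (pi s0) by apply: hf; rewrite s00 s01.
  have s0i : 0 < s0 <= 1 by rewrite s00 ltW.
  have lo : forall t, 0 < t <= s0 -> relint r (prepend pi y s0 t).
    move=> t /andP [t0 ts]; rewrite prepend_lo ?(ltW t0) ?ts //.
    apply: (@relint_seg R m s r) => //; [exact: ai | exact: us|].
    by rewrite divr_gt0 // ler_pdivrMr // mul1r.
  have r0 : prepend pi y s0 0 = y.
    by rewrite prepend_lo ?lexx ?(ltW s00) // mul0r subr0 scale1r scale0r addr0.
  exists (prepend pi y s0); split; last split => //; last split.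
  + split; first by apply: continuous_subspaceT; apply: prepend_continuous => //; exact: hp.1.
    move=> t /andP [t0 t1]; have [ts|st] := leP t s0.
      have [->|t0'] := eqVneq t 0; first by rewrite r0; apply: relint_poly hy.
      by apply: (relint_poly rK); apply: lo; rewrite ts andbT lt_neqAle eq_sym t0' t0.
    by rewrite prepend_hi ?t1 ?(ltW st) //; apply: hp.2; rewrite t1 andbT.
  + move=> t /andP [t0 t1]; have [ts|st] := leP t s0.
      by apply: (IHf r rK (pi s0)) => //; apply: lo; rewrite t0 ts.
    by rewrite prepend_hi ?(ltW st) ?(ltW t1) //; apply: hf; rewrite t0 t1.
  + by rewrite prepend_hi // (ltW s01) lexx.
Qed.
Lemma in_some_cell (R : realType) (m : nat) (K : seq (seq 'rV[R]_m)) x :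
  is_complex K -> polyhedron K x -> exists2 s, s \in K & relint s x.
Proof.
move=> hK [t tK hx]; have [r rK [hr _]] := support_face hK tK hx.
by exists r.
Qed.

Lemma cell_lequiv (R : realType) (m : nat) (AP : Type) (K : seq (seq 'rV[R]_m))
  (V : AP -> set 'rV[R]_m) s x y :
  is_polyhedral_model K V -> s \in K -> relint s x -> relint s y -> lequiv K V x y.
Proof.
move=> hM sK hx hy phi; split; [exact: (@sem_inv R m AP K V phi hM s sK _ _ hx hy) | exact: (@sem_inv R m AP K V phi hM s sK _ _ hy hx)].
Qed.

Lemma lequiv_sym (R : realType) (m : nat) (AP : Type) (K : seq (seq 'rV[R]_m))
  (V : AP -> set 'rV[R]_m) x y : lequiv K V x y -> lequiv K V y x.
Proof. by move=> h phi; split => /(h phi). Qed.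

Lemma lequiv_trans (R : realType) (m : nat) (AP : Type) (K : seq (seq 'rV[R]_m))
  (V : AP -> set 'rV[R]_m) x y z : lequiv K V x y -> lequiv K V y z -> lequiv K V x z.
Proof. by move=> h1 h2 phi; split => [/(h1 phi).1 /(h2 phi).1 | /(h2 phi).2 /(h1 phi).2]. Qed.

Lemma sep_formula (R : realType) (m : nat) (AP : Type) (K : seq (seq 'rV[R]_m))
  (V : AP -> set 'rV[R]_m) x0 (L : seq (seq 'rV[R]_m)) :
  is_polyhedral_model K V -> polyhedron K x0 -> {subset L <= K} ->
  exists Phi : slcs AP, sem K V Phi x0 /\
    forall s, s \in L -> forall y, relint s y -> ~ lequiv K V x0 y -> ~ sem K V Phi y.
Proof.
move=> hM Px0; elim: L => [|s L IH] sub.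
  by exists FTop; split => // s; rewrite in_nil.
have sK : s \in K by apply: sub; rewrite in_cons eqxx.
have subL : {subset L <= K} by move=> t tL; apply: sub; rewrite in_cons tL orbT.
have [Phi [h1 h2]] := IH subL.
have [psi [p1 p2]] : exists psi : slcs AP, sem K V psi x0 /\
    forall y, relint s y -> ~ lequiv K V x0 y -> ~ sem K V psi y.
  have [[y1 [hy1 ny1]]|nex] := pselect (exists y, relint s y /\ ~ lequiv K V x0 y).
    have [phi hphi] : exists phi, ~ (sem K V phi x0 <-> sem K V phi y1).
      by apply: contrapT => hn; apply: ny1 => phi; apply: contrapT => hp; apply: hn; exists phi.
    have [f0|nf0] := pselect (sem K V phi x0).
      exists phi; split=> // y hy _ fy; apply: hphi; split=> // _.
      exact: (@sem_inv R m AP K V phi hM s sK _ _ hy hy1).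
    exists (FNeg phi); split; first by split.
    move=> y hy _ [_ nfy]; apply: nfy.
    have f1 : sem K V phi y1.
      by apply: contrapT => nf1; apply: hphi; split => h; [contradiction | contradiction].
    exact: (@sem_inv R m AP K V phi hM s sK _ _ hy1 hy).
  exists FTop; split=> // y hy ny _; apply: nex; by exists y.
exists (FAnd psi Phi); split; first by split.
move=> t; rewrite in_cons => /orP [/eqP -> | tL] y hy ny [ps Ph].
  exact: (p2 y hy ny).
exact: (h2 t tL y hy ny).
Qed.
Theorem mainTheorem3 (R : realType) (m : nat) (AP : finType)
  (K : seq (seq 'rV[R]_m)) (V : AP -> set 'rV[R]_m) :
  is_polyhedral_model K V ->
  finite_set (eq_classes K V) /\
  (forall C, eq_classes K V C ->
     exists phi : slcs AP,
       forall x, polyhedron K x -> (sem K V phi x <-> C x)).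
Proof.
move=> hM; have hK := hM.1.
pose cls (s : seq 'rV[R]_m) :=
  [set y | polyhedron K y /\ forall x, relint s x -> lequiv K V x y].
split.
  apply: (sub_finite_set _ (finite_image cls (finite_seq K))).
  move=> C [x Px ->]; have [s sK hx] := in_some_cell hK Px.
  exists s => //.
  apply/seteqP; split => y [Py h]; split => //.
    exact: h.
  move=> x' hx'; apply: lequiv_trans h.
  exact: (cell_lequiv hM sK hx' hx).
move=> C [x0 Px0 ->].
have [Phi [h1 h2]] := @sep_formula R m AP K V x0 K hM Px0 (fun s h => h).
exists Phi => z Pz; split.
  move=> hz; split=> //; apply: contrapT => nz.
  have [s sK hs] := in_some_cell hK Pz.
  exact: (h2 s sK z hs nz hz).
by case=> _ hz; apply: (hz Phi).1.
Qed.
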